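(* Let $P$ and $P'$ be two probability measures on a measurable space $(\Omega,\mathcal A)$. Let $a,b>0$ and let $(\Delta_n)_{n\in\mathbb N}$ be a sequence of positive numbers with $\Delta_n\to\infty$. Set $K_n:=\lceil an^2\rceil$. Suppose that for all sufficiently large $n\in\mathbb N$ there are random variables $X^n_k$, $k\in\{1,\dots,K_n\}$, on $(\Omega,\mathcal A)$ which are pairwise uncorrelated in $k$ both under $P$ and under $P'$, satisfy $|X^n_k|\le b$, and satisfy $$E_{P'}[X^n_k]-E_P[X^n_k]\ge\tfrac1n\Delta_n,\qquad k\in\{1,\dots,K_n\}.$$ Then $P$ and $P'$ are mutually singular. *)

(* Defs.v *)
From HB Require Import structures.
From mathcomp Require Import all_boot all_order all_algebra.
From mathcomp Require Import all_classical all_reals all_analysis.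
Set Implicit Arguments. Unset Strict Implicit. Unset Printing Implicit Defensive.
Import Order.TTheory GRing.Theory Num.Theory.
Local Open Scope classical_set_scope.
Local Open Scope ring_scope.

Definition Expect d (T : measurableType d) (R : realType)
  (P : probability T R) (f : T -> R) : \bar R := (\int[P]_x (f x)%:E)%E.

Definition mutually_singular d (T : measurableType d) (R : realType)
  (P Q : set T -> \bar R) : Prop :=
  exists A : set T, [/\ measurable A, P A = 0%E & Q (~` A) = 0%E].

Definition Kn (R : realType) (a : R) (n : nat) : nat :=
  `| Num.ceil (a * n%:R ^+ 2) |%N.

(* Main.v *)
Require Import Defs.
From HB Require Import structures.
From mathcomp Require Import all_boot all_order all_algebra.
From mathcomp Require Import all_classical all_reals all_analysis.
From mathcomp Require Import measurable_realfun.
From mathcomp Require Import lra ring.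
Import Order.TTheory GRing.Theory Num.Theory.
Local Open Scope classical_set_scope.
Local Open Scope ring_scope.

Lemma small_eq0 (R : realType) (x : \bar R) : (0 <= x)%E ->
  (forall J : nat, x <= (J.+1%:R^-1)%:E)%E -> x = 0%E.
Proof.
move=> x0 H; apply/eqP; rewrite eq_le x0 andbT; apply/lee_addgt0Pr => e e0.
rewrite add0e; apply: (le_trans (H (Num.Def.trunc e^-1))); rewrite lee_fin.
have ie : 0 < e^-1 by rewrite invr_gt0.
have /andP[_ h] := truncn_itv (ltW ie).
rewrite -[leRHS]invrK ltW// ltf_pV2// ?posrE ?invr_gt0//.
Qed.

Lemma eps_le (R : realType) (J j : nat) :
  (J.+1%:R^-1 / (2 ^ j.+1)%:R <= j.+1%:R^-1 :> R).
Proof.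
rewrite ler_pdivrMr ?ltr0n ?expn_gt0//.
apply: (@le_trans _ _ 1); first by rewrite invf_le1 ?ler1n ?ltr0n.
by rewrite ler_pdivlMl ?ltr0n// mulr1 ler_nat ltnW// ltn_expl.
Qed.

Lemma sing d (T : measurableType d) (R : realType) (P P' : probability T R) :
  (forall e : R, 0 < e -> exists B, [/\ measurable B, (P B <= e%:E)%E &
     (P' (~` B) <= e%:E)%E]) -> mutually_singular P P'.
Proof.
move=> H.
pose eps (J j : nat) : R := J.+1%:R^-1 / (2 ^ j.+1)%:R.
have eps0 J j : 0 < eps J j by rewrite divr_gt0 ?invr_gt0 ?ltr0n ?expn_gt0.
have [B HB] : exists B : nat -> nat -> set T, forall J j,
    [/\ measurable (B J j), (P (B J j) <= (eps J j)%:E)%E &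
     (P' (~` B J j) <= (eps J j)%:E)%E].
  have h1 J : exists f : nat -> set T, forall j,
    [/\ measurable (f j), (P (f j) <= (eps J j)%:E)%E &
     (P' (~` f j) <= (eps J j)%:E)%E].
    by have [f hf] := choice (fun j => H _ (eps0 J j)); exists f.
  by have [f hf] := choice h1; exists f.
have mB J j : measurable (B J j) by have [] := HB J j.
pose U J := \bigcup_j B J j.
have mU J : measurable (U J) by apply: bigcupT_measurable.
exists (\bigcap_J U J); split.
- exact: bigcapT_measurable.
- apply: small_eq0 => // J.
  apply: (le_trans (le_measure _ _ _ (@bigcap_inf _ _ J setT U I))) => //; rewrite ?inE//.
    exact: bigcapT_measurable.
  apply: (le_trans (measure_sigma_subadditive _ (mB J) (mU J) (@subset_refl _ _))).
  have e0 : (0 <= J.+1%:R^-1 :> R) by rewrite invr_ge0.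
  apply: (le_trans _ (epsilon_trick0 xpredT e0)).
  apply: lee_nneseries => [j _ _|j _]; first exact: measure_ge0.
  by have [] := HB J j.
- rewrite setC_bigcap.
  apply/eqP; rewrite eq_le measure_ge0 andbT.
  apply: (le_trans (measure_sigma_subadditive _ _ _ (@subset_refl _ _))).
  + by move=> J; apply: measurableC.
  + by apply: bigcupT_measurable => J; apply: measurableC.
  rewrite eseries0// => J _ _.
  apply: small_eq0 => // j.
  have -> : ~` U J = \bigcap_j ~` B J j by rewrite setC_bigcup.
  apply: (le_trans (le_measure _ _ _ (@bigcap_inf _ _ j setT _ I))); rewrite ?inE//.
  + by apply: bigcapT_measurable => k; apply: measurableC.
  + exact: measurableC.
  have [_ _ h] := HB J j; apply: (le_trans h); rewrite lee_fin; exact: eps_le.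
Qed.

Section S.
Context d (T : measurableType d) (R : realType) (Q : probability T R).
Local Open Scope ereal_scope.

Lemma Lfun2_bnd (f : T -> R) (b : R) : measurable_fun setT f ->
  (forall x, `|f x| <= b)%R -> f \in Lfun Q 2%:E.
Proof.
move=> mf fb; rewrite inE; apply/andP; split; first by rewrite inE.
rewrite inE /= /finite_norm unlock /Lnorm; apply: poweR_lty.
under eq_integral => x _ do rewrite /comp abse_EFin poweR_EFin.
apply: (@le_lt_trans _ _ (\int[Q]_x (`|b| `^ 2)%:E)).
  apply: ge0_le_integral => //.
  - apply/measurable_EFinP.
    apply: (@measurableT_comp _ _ _ _ _ _ (@powR R ^~ 2%R)) => //.
    exact: measurableT_comp.
  - move=> x _ /=; rewrite lee_fin ge0_ler_powR// ?nnegrE//.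
    exact: le_trans (fb x) (ler_norm b).
by rewrite integral_cst//= probability_setT mule1 ltry.
Qed.



Lemma var_le_bnd (f : T -> R) (b : R) : measurable_fun setT f ->
  (forall x, `|f x| <= b)%R -> 'V_Q[f] <= (b ^+ 2)%:E.
Proof.
move=> mf fb.
have f2 := Lfun2_bnd f b mf fb.
rewrite varianceE//.
have f1 : f \in Lfun Q 1 by apply: Lfun_subset12 => //; apply: fin_num_measure.
have Efin := expectation_fin_num f1.
rewrite -(fineK Efin) -EFin_expe.
have hE : 'E_Q[f ^+ 2] <= (b ^+ 2)%:E.
  rewrite -(expectation_cst Q); apply: expectation_le => //.
  - by rewrite expr2; apply: measurable_funM.
  - by move=> x; rewrite -[((f ^+ 2) x)%R]/(f x ^+ 2)%R sqr_ge0.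
  - by move=> x; rewrite /= sqr_ge0.
  - apply: aeW => x; rewrite -[((f ^+ 2) x)%R]/(f x ^+ 2)%R /=.
    rewrite -real_normK ?num_real// ler_pXn2r ?nnegrE//.
    exact: le_trans (fb x).
apply: le_trans hE.
rewrite leeBlDr// leeDl// lee_fin sqr_ge0//.
Qed.

Lemma var_sum (K : nat) (Y : nat -> T -> R) (b : R) :
  (forall k, (k < K)%N -> measurable_fun setT (Y k)) ->
  (forall k, (k < K)%N -> forall x, `|Y k x| <= b)%R ->
  (forall k l, (k < K)%N -> (l < K)%N -> k != l ->
     'E_Q[Y k \* Y l] = 'E_Q[Y k] * 'E_Q[Y l]) ->
  'V_Q[fun x => (\sum_(k < K) Y k x)%R] <= (K%:R * b ^+ 2)%:E.
Proof.
move=> mY bY uY.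
pose S m := fun x => (\sum_(k < m) Y k x)%R.
have SS m : S m.+1 = (S m \+ Y m)%R.
  by apply/funext => x; rewrite /S big_ord_recr.
have S0 : S 0%N = cst 0%R by apply/funext => x; rewrite /S big_ord0.
have L2 k : (k < K)%N -> Y k \in Lfun Q 2%:E.
  by move=> kK; apply: (Lfun2_bnd _ b); [exact: mY|exact: bY].
have Pfin : Q setT \is a fin_num by apply: fin_num_measure.
have L1 k : (k < K)%N -> Y k \in Lfun Q 1 by move=> kK; exact: Lfun_subset12 (L2 k kK).
have SL m : (m <= K)%N -> S m \in Lfun Q 2%:E.
  elim: m => [|m IH] mK; first by rewrite S0 Lfun_cst.
  have h1 := IH (ltnW mK); have h2 := L2 m mK.
  by rewrite SS rpredD// lee_fin ler1n.
have cov0 k l : (k < K)%N -> (l < K)%N -> k != l -> covariance Q (Y k) (Y l) = 0.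
  move=> kK lK kl; rewrite covarianceE ?L1//; last first.
    exact: Lfun2_mul_Lfun1 (L2 k kK) (L2 l lK).
  have -> : 'E_Q[Y k * Y l] = 'E_Q[Y k] * 'E_Q[Y l] by exact: uY.
  rewrite subee// fin_numM// expectation_fin_num// L1//.
have covS m l : (m <= l)%N -> (l < K)%N -> covariance Q (S m) (Y l) = 0.
  elim: m => [|m IH] ml lK; first by rewrite S0 covariance_cst_l.
  have mK : (m.+1 < K)%N := leq_ltn_trans ml lK.
  rewrite SS covarianceDl; last 3 first.
  - exact: SL (ltnW (ltnW mK)).
  - exact: L2 (ltnW mK).
  - exact: L2 lK.
  rewrite IH; last 2 first.
  - exact: ltnW.
  - exact: lK.
  rewrite (cov0 m l) ?adde0//; first exact: ltnW.
  by rewrite neq_ltn ml.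
suff H m : (m <= K)%N -> 'V_Q[S m] <= (m%:R * b ^+ 2)%:E.
  exact: (H K (leqnn K)).
elim: m => [|m IH] mK.
  by rewrite S0 variance_cst mul0r.
rewrite SS varianceD; last 2 first.
- exact: SL (ltnW mK).
- exact: L2 mK.
rewrite (covS m m (leqnn m) mK) mule0 adde0.
rewrite -natr1 mulrDl mul1r EFinD; apply: leeD.
  exact: IH (ltnW mK).
exact: var_le_bnd (mY m mK) (bY m mK).
Qed.
Lemma meas_sum (K : nat) (Y : nat -> T -> R) :
  (forall k, (k < K)%N -> measurable_fun setT (Y k)) ->
  measurable_fun setT (fun x => (\sum_(k < K) Y k x)%R).
Proof.
move=> mY; apply: (@measurable_sum _ _ _ _ _ _ (fun (i : 'I_K) => Y i)) => i.
exact: mY.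
Qed.

Lemma meas_ge (f : T -> R) (c : R) : measurable_fun setT f ->
  measurable [set x | (c <= f x)%R].
Proof.
move=> mf.
have := mf measurableT _ (measurable_itv `[c, +oo[).
rewrite setTI; congr measurable; apply/seteqP; split => x /=;
  by rewrite in_itv/= andbT.
Qed.

Lemma cheb_sum (K : nat) (Y : nat -> T -> R) (b e : R) : (0 < e)%R ->
  (forall k, (k < K)%N -> measurable_fun setT (Y k)) ->
  (forall k, (k < K)%N -> forall x, `|Y k x| <= b)%R ->
  (forall k l, (k < K)%N -> (l < K)%N -> k != l ->
     'E_Q[Y k \* Y l] = 'E_Q[Y k] * 'E_Q[Y l]) ->
  Q [set x | (e <= `|\sum_(k < K) Y k x - fine 'E_Q[fun x => (\sum_(k < K) Y k x)%R]|)%R]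
    <= (e ^- 2 * (K%:R * b ^+ 2))%:E.
Proof.
move=> e0 mY bY uY.
have mS : (fun x => (\sum_(k < K) Y k x)%R) \in mfun by rewrite inE; exact: meas_sum.
have := @chebyshev _ _ _ Q (mfun_Sub mS) _ e0.
move=> /le_trans; apply.
rewrite EFinM lee_pmul2l ?lte_fin ?invr_gt0 ?exprn_gt0//.
exact: var_sum.
Qed.

Lemma expS (K : nat) (Y : nat -> T -> R) :
  (forall k, (k < K)%N -> Y k \in Lfun Q 1) ->
  'E_Q[fun x => (\sum_(k < K) Y k x)%R] = (\sum_(k < K) fine 'E_Q[Y k])%:E.
Proof.
move=> L1.
suff H m : (m <= K)%N -> 'E_Q[fun x => (\sum_(k < m) Y k x)%R] = (\sum_(k < m) fine 'E_Q[Y k])%:E.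
  exact: H.
elim: m => [|m IH] mK.
  rewrite big_ord0 -(expectation_cst Q 0%R); congr expectation.
  by apply/funext => x; rewrite big_ord0.
have -> : (fun x => (\sum_(k < m.+1) Y k x)%R) = ((fun x => (\sum_(k < m) Y k x)%R) \+ Y m)%R.
  by apply/funext => x; rewrite big_ord_recr.
have Ls m' : (m' <= K)%N -> (fun x => (\sum_(k < m') Y k x)%R) \in Lfun Q 1.
  elim: m' => [|m' IH'] mK'.
    have -> : (fun x => (\sum_(k < 0) Y k x)%R) = cst 0%R.
      by apply/funext => x; rewrite big_ord0.
    exact: Lfun_cst.
  have -> : (fun x => (\sum_(k < m'.+1) Y k x)%R) = ((fun x => (\sum_(k < m') Y k x)%R) \+ Y m')%R.
    by apply/funext => x; rewrite big_ord_recr.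
  have h1 := IH' (ltnW mK'); have h2 := L1 m' mK'.
  by rewrite rpredD.
rewrite expectationD; last 2 first.
- exact: Ls (ltnW mK).
- exact: L1 mK.
rewrite IH; last exact: ltnW.
rewrite big_ord_recr /= EFinD fineK//.
exact: expectation_fin_num (L1 m mK).
Qed.
End S.

Section T2.
Context d (T : measurableType d) (R : realType) (P P' : probability T R).
Local Open Scope ereal_scope.

Lemma sep (K : nat) (Y : nat -> T -> R) (b D : R) : (0 < D)%R -> (0 < K)%N ->
  (forall k, (k < K)%N -> measurable_fun setT (Y k)) ->
  (forall k, (k < K)%N -> forall x, `|Y k x| <= b)%R ->
  (forall k l, (k < K)%N -> (l < K)%N -> k != l ->
     'E_P[Y k \* Y l] = 'E_P[Y k] * 'E_P[Y l] /\
     'E_P'[Y k \* Y l] = 'E_P'[Y k] * 'E_P'[Y l]) ->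
  (forall k, (k < K)%N -> D%:E <= 'E_P'[Y k] - 'E_P[Y k]) ->
  exists B, [/\ measurable B, P B <= (4 * b ^+ 2 / (K%:R * D ^+ 2))%:E &
     P' (~` B) <= (4 * b ^+ 2 / (K%:R * D ^+ 2))%:E].
Proof.
move=> D0 K0 mY bY uY gap.
pose S := fun x => (\sum_(k < K) Y k x)%R.
have mS : measurable_fun setT S by exact: (@meas_sum _ _ _).
have L1 (Q : probability T R) k : (k < K)%N -> Y k \in Lfun Q 1.
  move=> kK; apply: Lfun_subset12; first exact: fin_num_measure.
  exact: (@Lfun2_bnd _ _ _ Q _ b (mY k kK) (bY k kK)).
pose m := fine 'E_P[S]; pose m' := fine 'E_P'[S].
have hm : m = (\sum_(k < K) fine 'E_P[Y k])%R by rewrite /m (@expS _ _ _ P)// => k; exact: L1.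
have hm' : m' = (\sum_(k < K) fine 'E_P'[Y k])%R by rewrite /m' (@expS _ _ _ P')// => k; exact: L1.
have gapK : (K%:R * D <= m' - m)%R.
  have -> : (K%:R * D = \sum_(k < K) D)%R.
    by rewrite sumr_const card_ord mulr_natl.
  rewrite hm hm' -sumrB.
  apply: ler_sum => k _.
  have := gap k (ltn_ord k).
  rewrite -(fineK (expectation_fin_num (L1 P k (ltn_ord k)))).
  rewrite -(fineK (expectation_fin_num (L1 P' k (ltn_ord k)))).
  by rewrite -EFinB lee_fin.
pose e := ((m' - m) / 2)%R.
have KD0 : (0 < K%:R * D)%R by rewrite mulr_gt0// ltr0n.
have e0 : (0 < e)%R by rewrite divr_gt0// (lt_le_trans KD0).
have ebnd : (e ^- 2 * (K%:R * b ^+ 2) <= 4 * b ^+ 2 / (K%:R * D ^+ 2))%R.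
  have eKD : (K%:R * D / 2 <= e)%R by rewrite /e; lra.
  have KD20 : (0 < K%:R * D / 2)%R by rewrite divr_gt0.
  have h1 : (e ^- 2 <= ((K%:R * D / 2) ^+ 2)^-1)%R.
    rewrite lef_pV2 ?posrE ?exprn_gt0//.
    by rewrite ler_pXn2r// ?nnegrE ltW// (lt_le_trans KD20).
  apply: le_trans (ler_wpM2r _ h1) _.
    by rewrite mulr_ge0// sqr_ge0.
  have K0' : (K%:R != 0 :> R)%R by rewrite pnatr_eq0 -lt0n.
  have D0' : (D != 0)%R by rewrite gt_eqF.
  rewrite le_eqVlt; apply/orP; left; apply/eqP; field.
  by rewrite K0' D0'.
pose c := ((m + m') / 2)%R.
exists [set x | (c <= S x)%R]; split.
- exact: (@meas_ge _ _ _).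
- apply: (@le_trans _ _ (P [set x | (e <= `|S x - m|)%R])).
    apply: le_measure; rewrite ?inE.
    + exact: meas_ge.
    + apply: (@meas_ge _ _ _); apply: measurableT_comp => //.
      exact: measurable_funB.
    + move=> x /= hx; apply: le_trans (ler_norm _).
      by move: hx; rewrite /c /e; lra.
  apply: le_trans (@cheb_sum _ _ _ P _ _ _ _ e0 mY bY _) _.
    by move=> k l kK lK kl; have [] := uY k l kK lK kl.
  by rewrite lee_fin.
- apply: (@le_trans _ _ (P' [set x | (e <= `|S x - m'|)%R])).
    apply: le_measure; rewrite ?inE.
    + exact/measurableC/(@meas_ge _ _ _).
    + apply: (@meas_ge _ _ _); apply: measurableT_comp => //.
      exact: measurable_funB.
    + move=> x /= /negP hx; rewrite -ltNge in hx.
      rewrite -normrN; apply: le_trans (ler_norm _).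
      by move: hx; rewrite /c /e; lra.
  apply: le_trans (@cheb_sum _ _ _ P' _ _ _ _ e0 mY bY _) _.
    by move=> k l kK lK kl; have [] := uY k l kK lK kl.
  by rewrite lee_fin.
Qed.
End T2.

Lemma ExpectE d (T : measurableType d) (R : realType) (P : probability T R) f :
  (Expect P f = 'E_P[f])%E.
Proof. by rewrite /Expect unlock. Qed.

Lemma Kn_pos (R : realType) (a : R) n : 0 < a -> (0 < n)%N -> (0 < Kn a n)%N.
Proof.
move=> a0 n0; rewrite /Kn absz_gt0 gt_eqF// ceil_gt0 mulr_gt0// exprn_gt0//.
by rewrite ltr0n.
Qed.

Lemma Kn_ge (R : realType) (a : R) n : 0 < a -> a * n%:R ^+ 2 <= (Kn a n)%:R.
Proof.
move=> a0; rewrite /Kn natr_absz ger0_norm ?ceil_ge//.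
have h : 0 <= a * n%:R ^+ 2 by rewrite mulr_ge0 ?sqr_ge0 ?ltW.
by rewrite ceil_ge0; apply: lt_le_trans h; rewrite ltrN10.
Qed.

Theorem lemma4 (d : measure_display) (T : measurableType d) (R : realType)
  (P P' : probability T R) (a b : R) (Delta : nat -> R) :
  0 < a -> 0 < b ->
  (forall n, 0 < Delta n) ->
  Delta n @[n --> \oo] --> +oo ->
  (\forall n \near \oo, exists X : nat -> T -> R,
     [/\ (forall k, (1 <= k <= Kn a n)%N -> measurable_fun setT (X k)),
         (forall k l, (1 <= k <= Kn a n)%N -> (1 <= l <= Kn a n)%N -> k != l ->
            Expect P (X k \* X l) = (Expect P (X k) * Expect P (X l))%E /\
            Expect P' (X k \* X l) = (Expect P' (X k) * Expect P' (X l))%E),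
         (forall k, (1 <= k <= Kn a n)%N -> forall x, `|X k x| <= b) &
         (forall k, (1 <= k <= Kn a n)%N ->
            ((Delta n / n%:R)%:E <= Expect P' (X k) - Expect P (X k))%E)]) ->
  mutually_singular P P'.
Proof.
move=> a0 b0 D0 Dcvg HX.
apply: sing => e e0.
pose M := 4 * b ^+ 2 / (a * e) + 1.
have [n [n0 hM [X [mX uX bX gX]]]] : exists n, [/\ (0 < n)%N, M <= Delta n &
  exists X : nat -> T -> R,
     [/\ (forall k, (1 <= k <= Kn a n)%N -> measurable_fun setT (X k)),
         (forall k l, (1 <= k <= Kn a n)%N -> (1 <= l <= Kn a n)%N -> k != l ->
            Expect P (X k \* X l) = (Expect P (X k) * Expect P (X l))%E /\
            Expect P' (X k \* X l) = (Expect P' (X k) * Expect P' (X l))%E),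
         (forall k, (1 <= k <= Kn a n)%N -> forall x, `|X k x| <= b) &
         (forall k, (1 <= k <= Kn a n)%N ->
            ((Delta n / n%:R)%:E <= Expect P' (X k) - Expect P (X k))%E)]].
  have h1 := nbhs_infty_gt 0.
  have h2 : \forall n \near \oo, M <= Delta n by move/cvgryPge : Dcvg => /(_ M).
  have [N _ HN] := filterI h1 (filterI h2 HX).
  have [? [? ?]] := HN N (leqnn N).
  by exists N.
set K := Kn a n.
have K0 := Kn_pos _ _ _ a0 n0.
pose D := Delta n / n%:R.
have Dp : 0 < D by rewrite divr_gt0 ?ltr0n.
have uY : forall k l, (k < K)%N -> (l < K)%N -> k != l ->
     ('E_P[X k.+1 \* X l.+1] = 'E_P[X k.+1] * 'E_P[X l.+1] /\
     'E_P'[X k.+1 \* X l.+1] = 'E_P'[X k.+1] * 'E_P'[X l.+1])%E.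
  by move=> k l kK lK kl; rewrite -!ExpectE; apply: uX.
have gY : forall k, (k < K)%N -> (D%:E <= 'E_P'[X k.+1] - 'E_P[X k.+1])%E.
  by move=> k kK; rewrite -!ExpectE; exact: gX.
have [B [mB PB P'B]] := @sep _ _ _ P P' K (fun k => X k.+1) b D Dp K0
  (fun k kK => mX k.+1 kK) (fun k kK => bX k.+1 kK) uY gY.
have key : 4 * b ^+ 2 / (K%:R * D ^+ 2) <= e.
  have Kge := Kn_ge _ a n a0.
  have n0' : (0 < n%:R :> R) by rewrite ltr0n.
  have KD : a * Delta n ^+ 2 <= K%:R * D ^+ 2.
    rewrite /D expr_div_n [K%:R * _]mulrA ler_pdivlMr ?exprn_gt0 // mulrAC.
    by apply: ler_wpM2r; [exact: sqr_ge0|exact: Kge].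
  have M1 : 1 <= M.
    by rewrite /M lerDr divr_ge0 ?mulr_ge0 ?sqr_ge0 ?ltW.
  have MD : M <= Delta n ^+ 2.
    have D1 : 1 <= Delta n by exact: le_trans M1 hM.
    rewrite expr2; apply: le_trans hM _.
    by rewrite ler_peMr // ltW // D0.
  rewrite ler_pdivrMr; last by rewrite mulr_gt0 ?ltr0n ?exprn_gt0.
  apply: (@le_trans _ _ (e * (a * M))).
    have a0' : a != 0 by rewrite gt_eqF.
    have e0' : e != 0 by rewrite gt_eqF.
    have -> : e * (a * M) = 4 * b ^+ 2 + e * a.
      by rewrite /M; field; rewrite a0' e0'.
    by rewrite lerDl mulr_ge0 ?ltW.
  apply: ler_wpM2l; first exact: ltW.
  exact: le_trans (ler_wpM2l (ltW a0) MD) KD.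
exists B; split => //.
  by apply: le_trans PB _; rewrite lee_fin.
by apply: le_trans P'B _; rewrite lee_fin.
Qed.
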